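(* Let $\mathbb{S}\in\mathbb{Z}^{N_X\times N_e}$, $\mathcal{X}=\mathbb{R}^{N_X}_{>0}$, $\Phi$ a primal thermodynamic function on $\mathcal{X}$ with Legendre conjugate $\Phi^*$, $\tilde{x}\in\mathcal{X}$, and $\{\Psi^*_x\}_{x\in\mathcal{X}}$ a family of dissipation functions on $\mathbb{R}^{N_e}$. Consider the equilibrium flow $$\dot{x}=-\mathbb{S}\,\nabla\Psi^*_x\Big(\mathbb{S}^T\big(\nabla\Phi(x)-\nabla\Phi(\tilde{x})\big)\Big)$$ with initial state $x(0)=x_0\in\mathcal{X}$, flux $j(x)=\nabla\Psi^*_x(\mathbb{S}^T(\nabla\Phi(x)-\nabla\Phi(\tilde x)))$. Define $\mathcal{P}^{sc}(x_0):=\{x\in\mathcal{X}:x-x_0\in\mathrm{Im}\,\mathbb{S}\}$ (the set in which the trajectory from $x_0$ stays), $\mathcal{M}^{eq}(\tilde{x}):=\{x\in\mathcal{X}:\nabla\Phi(x)-\nabla\Phi(\tilde{x})\in\mathrm{Ker}\,\mathbb{S}^T\}$, and $\mathcal{M}^{\mathrm{DB}}:=\{x\in\mathcal{X}:j(x)=0\}$. Then the steady state $x_{eq}$ of the flow started from $x_0$ (the equilibrium state) is the point $x^\dagger$ forming the intersection $\mathcal{P}^{sc}(x_0)\cap\mathcal{M}^{eq}(\tilde{x})$; hence it exists and is unique for each pair $(x_0,\tilde{x})$. Moreover, $$x_{eq}=\arg\min_{x\in\mathcal{P}^{sc}(x_0)}\mathcal{D}_\Phi[x\|\tilde{x}]=\arg\min_{x_q\in\mathcal{M}^{eq}(\tilde{x})}\mathcal{D}_\Phi[x_0\|x_q],$$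 and $\mathcal{M}^{eq}(\tilde{x})=\mathcal{M}^{\mathrm{DB}}$.
   Context: A primal thermodynamic function is a strictly convex differentiable $\Phi:\mathcal{X}\to\mathbb{R}$ such that $\{\nabla\Phi(x):x\in\mathcal{X}\}=\mathbb{R}^{N_X}$ and, for every $x_{in}\in\mathcal{X}$ and $x_{bd}\in\mathbb{R}^{N_X}_{\ge0}\setminus\mathcal{X}$, $\lim_{\lambda\to0^+}\frac{d}{d\lambda}\Phi(\lambda x_{in}+(1-\lambda)x_{bd})=-\infty$. $\Phi^*(y)=\max_{x\in\mathcal{X}}[\langle x,y\rangle-\Phi(x)]$ on $\mathbb{R}^{N_X}$, and $\nabla\Phi,\nabla\Phi^*$ are mutually inverse bijections between $\mathcal{X}$ and $\mathbb{R}^{N_X}$. The Bregman divergence is $\mathcal{D}_\Phi[x\|x']=\Phi(x)-\Phi(x')-\langle x-x',\nabla\Phi(x')\rangle$. A dissipation function on $\mathbb{R}^{N_e}$ is a strictly convex, continuously differentiable, $1$-coercive ($\psi(f)/\|f\|\to\infty$), even function $\psi$ with $\psi(0)=0$. A steady state is a point where $\dot{x}=0$. *)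

(* Defs.v *)
From HB Require Import structures.
From mathcomp Require Import all_boot all_order all_algebra.
From mathcomp Require Import all_classical all_reals all_analysis.
Set Implicit Arguments. Unset Strict Implicit. Unset Printing Implicit Defensive.
Import Order.TTheory GRing.Theory Num.Theory.
Import numFieldNormedType.Exports.
Local Open Scope classical_set_scope.
Local Open Scope ring_scope.

Section Defs.
Variable R : realType.

Definition dotv (n : nat) (x y : 'cV[R]_n) : R := \sum_(i < n) x i 0 * y i 0.

Definition posorth (n : nat) : set 'cV[R]_n := [set x | forall i, 0 < x i 0].
Definition nnegorth (n : nat) : set 'cV[R]_n := [set x | forall i, 0 <= x i 0].

Definition grad (n : nat) (f : 'cV[R]_n -> R) (x : 'cV[R]_n) : 'cV[R]_n :=
  \col_(i < n) ('d f x (delta_mx i 0 : 'cV[R]_n)).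

Definition strictly_convex_on (n : nat) (D : set 'cV[R]_n) (f : 'cV[R]_n -> R) :=
  forall x y, D x -> D y -> x != y -> forall t : R, 0 < t < 1 ->
    f (t *: x + (1 - t) *: y) < t * f x + (1 - t) * f y.

Definition primal_thermodynamic (n : nat) (Phi : 'cV[R]_n -> R) : Prop :=
  [/\ strictly_convex_on (@posorth n) Phi,
      (forall x, @posorth n x -> differentiable Phi x),
      (forall y : 'cV[R]_n, exists2 x, @posorth n x & grad Phi x = y) &
      (forall xin xbd, @posorth n xin -> @nnegorth n xbd -> ~ @posorth n xbd ->
         (fun l : R => derive1 (fun m : R => Phi (m *: xin + (1 - m) *: xbd)) l)
           @ (0 : R)^'+ --> -oo)].

Definition bregman (n : nat) (Phi : 'cV[R]_n -> R) (x x' : 'cV[R]_n) : R :=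
  Phi x - Phi x' - dotv (x - x') (grad Phi x').

(* dissipation function on R^m (norm: the library's matrix norm; all norms
   on R^m are equivalent, so 1-coercivity does not depend on the choice) *)
Definition dissipation (m : nat) (Psi : 'cV[R]_m -> R) : Prop :=
  [/\ strictly_convex_on setT Psi,
      (forall f, differentiable Psi f),
      continuous (grad Psi),
      (forall M : R, exists r : R, forall f, r <= `|f| -> M <= Psi f / `|f|) &
      ((forall f, Psi (- f) = Psi f) /\ Psi 0 = 0)].

Definition realmx (n m : nat) (S : 'M[int]_(n, m)) : 'M[R]_(n, m) :=
  map_mx (fun z : int => z%:~R) S.

Definition flux (n m : nat) (S : 'M[int]_(n, m)) (Phi : 'cV[R]_n -> R)
  (Psi : 'cV[R]_n -> 'cV[R]_m -> R) (xt x : 'cV[R]_n) : 'cV[R]_m :=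
  grad (Psi x) ((realmx S)^T *m (grad Phi x - grad Phi xt)).

Definition eqflow (n m : nat) (S : 'M[int]_(n, m)) (Phi : 'cV[R]_n -> R)
  (Psi : 'cV[R]_n -> 'cV[R]_m -> R) (xt x : 'cV[R]_n) : 'cV[R]_n :=
  - (realmx S *m flux S Phi Psi xt x).

Definition steady_state (n m : nat) (S : 'M[int]_(n, m)) (Phi : 'cV[R]_n -> R)
  (Psi : 'cV[R]_n -> 'cV[R]_m -> R) (xt : 'cV[R]_n) : set 'cV[R]_n :=
  [set x | @posorth n x /\ eqflow S Phi Psi xt x = 0].

Definition Psc (n m : nat) (S : 'M[int]_(n, m)) (x0 : 'cV[R]_n) : set 'cV[R]_n :=
  [set x | @posorth n x /\ exists v : 'cV[R]_m, x - x0 = realmx S *m v].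

Definition Meq (n m : nat) (S : 'M[int]_(n, m)) (Phi : 'cV[R]_n -> R)
  (xt : 'cV[R]_n) : set 'cV[R]_n :=
  [set x | @posorth n x /\ (realmx S)^T *m (grad Phi x - grad Phi xt) = 0].

Definition MDB (n m : nat) (S : 'M[int]_(n, m)) (Phi : 'cV[R]_n -> R)
  (Psi : 'cV[R]_n -> 'cV[R]_m -> R) (xt : 'cV[R]_n) : set 'cV[R]_n :=
  [set x | @posorth n x /\ flux S Phi Psi xt x = 0].

End Defs.
Arguments posorth {R} n _.
Arguments nnegorth {R} n _.

(* Main.v *)
Require Import Defs.
From HB Require Import structures.
From mathcomp Require Import all_boot all_order all_algebra.
From mathcomp Require Import all_classical all_reals all_analysis.
From mathcomp Require Import ring lra.
Import Order.TTheory GRing.Theory Num.Theory.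
Import numFieldNormedType.Exports.
Local Open Scope classical_set_scope.
Local Open Scope ring_scope.
Set Implicit Arguments. Unset Strict Implicit.


Section Lin.
Variable R : realType.
Variable n : nat.
Implicit Types x y z : 'cV[R]_n.

Lemma dotvE x y : dotv x y = (x^T *m y) 0 0.
Proof. by rewrite /dotv mxE; apply: eq_bigr => i _; rewrite mxE. Qed.

Lemma dotvDl x y z : dotv (x + y) z = dotv x z + dotv y z.
Proof. by rewrite !dotvE linearD /= mulmxDl mxE. Qed.
Lemma dotvDr x y z : dotv z (x + y) = dotv z x + dotv z y.
Proof. by rewrite !dotvE mulmxDr mxE. Qed.
Lemma dotvZl (a : R) x y : dotv (a *: x) y = a * dotv x y.
Proof. by rewrite !dotvE linearZ /= -scalemxAl mxE. Qed.
Lemma dotvZr (a : R) x y : dotv x (a *: y) = a * dotv x y.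
Proof. by rewrite !dotvE -scalemxAr mxE. Qed.
Lemma dotvNl x y : dotv (- x) y = - dotv x y.
Proof. by rewrite -scaleN1r dotvZl mulN1r. Qed.
Lemma dotvNr x y : dotv x (- y) = - dotv x y.
Proof. by rewrite -scaleN1r dotvZr mulN1r. Qed.
Lemma dotvBl x y z : dotv (x - y) z = dotv x z - dotv y z.
Proof. by rewrite dotvDl dotvNl. Qed.
Lemma dotvBr x y z : dotv z (x - y) = dotv z x - dotv z y.
Proof. by rewrite dotvDr dotvNr. Qed.
Lemma dotv0l y : dotv 0 y = 0.
Proof. by rewrite /dotv big1 // => i _; rewrite mxE mul0r. Qed.
Lemma dotv0r y : dotv y 0 = 0.
Proof. by rewrite /dotv big1 // => i _; rewrite mxE mulr0. Qed.

Lemma dotv_eq0 x : dotv x x = 0 -> x = 0.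
Proof.
rewrite /dotv => /eqP; rewrite psumr_eq0; last by move=> i _; exact: mulr_ge0_le0 || rewrite -expr2 sqr_ge0.
move/allP => H; apply/matrixP => i j; rewrite (ord1 j) mxE.
have := H i (mem_index_enum _); rewrite /= mulf_eq0 orbb => /eqP //.
Qed.

Lemma diff_dotv (f : 'cV[R]_n -> R) x v : 'd f x v = dotv v (grad f x).
Proof.
rewrite {1}(matrix_sum_delta v) linear_sum /dotv; apply: eq_bigr => i _.
rewrite big_ord1 linearZ /= mxE; done.
Qed.

End Lin.

Lemma dotv_mul (R : realType) n m (A : 'M[R]_(n, m)) (u : 'cV[R]_m) (w : 'cV[R]_n) :
  dotv (A *m u) w = dotv u (A^T *m w).
Proof. by rewrite !dotvE trmx_mul -mulmxA. Qed.


Lemma right_sub_punct (R : realType) : (0:R)^'+ `=>` (0:R)^'.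
Proof.
move=> A [e egt0 Ae]; exists e => // x xe xgt0; apply: Ae => //.
exact/lt0r_neq0.
Qed.

Section Dq.
Variable R : realType.
Variable n : nat.
Implicit Types x y z w : 'cV[R]_n.

Lemma dq_right (f : 'cV[R]_n -> R) x w : differentiable f x ->
  (fun t : R => t^-1 * (f (x + t *: w) - f x)) @ 0^'+ --> 'd f x w.
Proof.
move=> df.
have dv := @diff_derivable _ _ _ f x w df.
rewrite -(deriveE w df) /derive.
have -> : (fun t : R => t^-1 * (f (x + t *: w) - f x)) =
  (fun h => h^-1 *: ((f \o shift x) (h *: w) - f x)).
  by apply/funext => t /=; rewrite [t *: w + x]addrC.
exact: (cvg_trans (cvg_app _ (@right_sub_punct R)) dv).
Qed.
End Dq.


Section Conv.
Variable R : realType.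
Variable n : nat.
Implicit Types x y z w : 'cV[R]_n.

Lemma dq_le (f : 'cV[R]_n -> R) x w K : differentiable f x ->
  (\forall t \near (0:R)^'+, t^-1 * (f (x + t *: w) - f x) <= K) -> 'd f x w <= K.
Proof. by move=> df; apply: cvgr_to_le; exact: dq_right. Qed.

Lemma dq_ge (f : 'cV[R]_n -> R) x w K : differentiable f x ->
  (\forall t \near (0:R)^'+, K <= t^-1 * (f (x + t *: w) - f x)) -> K <= 'd f x w.
Proof. by move=> df; apply: cvgr_to_ge; exact: dq_right. Qed.

Lemma near_right01 : \forall t \near (0:R)^'+, 0 < t < 1.
Proof.
near=> t; apply/andP; split; first by near: t; exact: nbhs_right_gt.
by near: t; exact: nbhs_right_lt.
Unshelve. all: by end_near. Qed.

Lemma tangent_le (D : set 'cV[R]_n) (f : 'cV[R]_n -> R) x y :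
  strictly_convex_on D f -> D x -> D y -> differentiable f x ->
  f x + 'd f x (y - x) <= f y.
Proof.
move=> cf Dx Dy df.
have [->|xy] := eqVneq x y; first by rewrite subrr linear0 addr0.
rewrite -lerBrDl; apply: dq_le => //.
near=> t.
have /andP[t0 t1] : 0 < t < 1 by near: t; exact: near_right01.
have yx : y != x by rewrite eq_sym.
have := cf y x Dy Dx yx t; rewrite t0 t1 => /(_ isT) h.
have -> : x + t *: (y - x) = t *: y + (1 - t) *: x.
  by rewrite scalerBr scalerBl scale1r addrCA addrA.
have h2 : f (t *: y + (1 - t) *: x) - f x <= t * (f y - f x).
  by apply: ltW; lra.
rewrite -[leRHS](mulKf (lt0r_neq0 t0)).
by apply: ler_wpM2l => //; rewrite invr_ge0 ltW.
Unshelve. all: by end_near. Qed.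

Lemma tangent_lt (D : set 'cV[R]_n) (f : 'cV[R]_n -> R) x y :
  (forall x y (t : R), D x -> D y -> 0 <= t <= 1 -> D (t *: x + (1 - t) *: y)) ->
  strictly_convex_on D f -> D x -> D y -> differentiable f x -> x != y ->
  f x + 'd f x (y - x) < f y.
Proof.
move=> Dc cf Dx Dy df xy.
have yx : y != x by rewrite eq_sym.
have Dw : D ((1/2) *: y + (1 - 1/2) *: x) by apply: Dc => //; apply/andP; split; lra.
have h1 := tangent_le cf Dx Dw df.
have := cf y x Dy Dx yx (1/2); rewrite (_ : 0 < 1/2 < 1) ?andbT; last by apply/andP; split; lra.
move=> /(_ isT) h2.
have e : (1/2) *: y + (1 - 1/2) *: x - x = (1/2:R) *: (y - x).
  by rewrite scalerBr -addrA; congr (_ + _); rewrite scalerBl scale1r addrC addrA addNr add0r.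
rewrite e linearZ /= in h1.
have h1' : f x + 1/2 * 'd f x (y - x) <= f ((1 / 2) *: y + (1 - 1 / 2) *: x) := h1.
lra.
Qed.

End Conv.


Section Psi.
Variable R : realType.
Variable n : nat.
Implicit Types x y z w v : 'cV[R]_n.

Lemma fermat_ge (f : 'cV[R]_n -> R) x w : differentiable f x ->
  (\forall t \near (0:R)^'+, f x <= f (x + t *: w)) -> 0 <= 'd f x w.
Proof.
move=> df H; apply: dq_ge => //; near=> t.
have t0 : 0 < t by near: t; exact: nbhs_right_gt.
apply: mulr_ge0; first by rewrite invr_ge0 ltW.
by rewrite subr_ge0; near: t.
Unshelve. all: by end_near. Qed.

Lemma fermat_eq (f : 'cV[R]_n -> R) x w : differentiable f x ->
  (\forall t \near (0:R)^'+, f x <= f (x + t *: w)) ->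
  (\forall t \near (0:R)^'+, f x <= f (x + t *: (- w))) -> 'd f x w = 0.
Proof.
move=> df H1 H2; apply/eqP; rewrite eq_le; apply/andP; split.
  by rewrite -oppr_ge0 -linearN; exact: fermat_ge.
exact: fermat_ge.
Qed.

Lemma neq_opp v : v != 0 -> v != - v.
Proof.
move=> v0; apply: contraNN v0 => /eqP e; apply/eqP/matrixP => i j.
have := congr1 (fun M : 'cV[R]_n => M i j) e; rewrite /= !mxE => h; lra.
Qed.

Lemma setT_conv : forall x y (t : R), [set: 'cV[R]_n] x -> [set: 'cV[R]_n] y ->
   0 <= t <= 1 -> [set: 'cV[R]_n] (t *: x + (1 - t) *: y).
Proof. by []. Qed.

Variable Psi : 'cV[R]_n -> R.
Hypothesis dP : dissipation Psi.

Lemma psi_pos v : v != 0 -> 0 < Psi v.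
Proof.
case: dP => cP _ _ _ [ev P0] v0.
have := cP v (- v) I I (neq_opp v0) (1/2).
rewrite (_ : 0 < 1/2 < 1); last by apply/andP; split; lra.
move=> /(_ isT); rewrite ev scalerN (_ : 1 - 1/2 = 1/2 :> R); last by lra.
rewrite subrr P0; lra.
Qed.

Lemma psi_ge0 v : 0 <= Psi v.
Proof.
have [->|v0] := eqVneq v 0; last exact/ltW/psi_pos.
by case: dP => _ _ _ _ [_ ->].
Qed.

Lemma grad_psi0 : grad Psi 0 = 0.
Proof.
case: dP => _ dif _ _ [_ P0].
apply/matrixP => i j; rewrite !mxE; apply: fermat_eq => //;
  by near=> t; rewrite add0r P0 psi_ge0.
Unshelve. all: by end_near. Qed.

Lemma psi_dot_pos v : v != 0 -> 0 < dotv v (grad Psi v).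
Proof.
move=> v0; case: dP => cP dif _ _ [_ P0].
have := tangent_lt setT_conv cP I I (dif v) v0.
rewrite P0 sub0r linearN /= diff_dotv.
have := psi_pos v0; lra.
Qed.

End Psi.


Section Phi.
Variable R : realType.
Variable n : nat.
Implicit Types x y z w v : 'cV[R]_n.

Lemma posorth_conv x y (t : R) : posorth n x -> posorth n y -> 0 <= t <= 1 ->
  posorth n (t *: x + (1 - t) *: y).
Proof.
move=> px py /andP[t0 t1] i; rewrite !mxE.
have := px i; have := py i; nra.
Qed.

Variable Phi : 'cV[R]_n -> R.
Hypothesis pPhi : primal_thermodynamic Phi.

Lemma phi_diff x : posorth n x -> differentiable Phi x.
Proof. by case: pPhi => _ d _ _; exact: d. Qed.

Lemma phi_tangent x y : posorth n x -> posorth n y ->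
  Phi x + dotv (y - x) (grad Phi x) <= Phi y.
Proof.
move=> px py; case: pPhi => c _ _ _.
by rewrite -diff_dotv; exact: tangent_le c px py (phi_diff px).
Qed.

Lemma bregman_pos x y : posorth n x -> posorth n y -> x != y -> 0 < bregman Phi x y.
Proof.
move=> px py xy; case: pPhi => c _ _ _.
have yx : y != x by rewrite eq_sym.
have := tangent_lt (@posorth_conv) c py px (phi_diff py) yx.
rewrite diff_dotv /bregman; lra.
Qed.
End Phi.


Lemma trmx_cont (R : realType) p q : continuous (fun M : 'M[R]_(p, q) => M^T).
Proof.
move=> M A /nbhs_ballP [e e0 H]; apply/nbhs_ballP; exists e => // N hN; apply: H.
move: hN; rewrite /ball /= => -[e0' h]; split => // i j; rewrite !mxE; exact: h.
Qed.

Lemma dotv_cont (R : realType) n (c : 'cV[R]_n) : continuous (fun x => dotv x c).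
Proof.
move=> x; rewrite /dotv.
suff H : forall s : seq 'I_n,
    {for x, continuous (fun y : 'cV[R]_n => \sum_(i <- s) y i 0 * c i 0)}.
  exact: H.
elim => [|i s IH].
{ have -> : (fun y : 'cV[R]_n => \sum_(j <- [::]) y j 0 * c j 0) = fun _ => 0.
    by apply/funext => y; rewrite big_nil.
  exact: (@cvg_cst _ (0:R) _ (nbhs x) _). }
have -> : (fun y : 'cV[R]_n => \sum_(j <- i :: s) y j 0 * c j 0) =
   (fun y => y i 0 * c i 0) + (fun y => \sum_(j <- s) y j 0 * c j 0).
  by apply/funext => y; rewrite big_cons.
apply: continuousD => //.
exact: (@cvgMr_tmp _ _ (nbhs x) _ _ _ _ (@coord_continuous R n 1 i 0 x)).
Qed.


Lemma cluster_le (R : realType) (T : topologicalType) (F : set_system T) (p : T)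
  (g : T -> R) (c : R) :
  cluster F p -> g @ p --> g p -> F [set x | g x <= c] -> g p <= c.
Proof.
move=> cl gc Fg; rewrite leNgt; apply/negP => cg.
have U := @cvgr_gt R T (nbhs p) (nbhs_filter p) g (g p) gc c cg.
have [y [/= h1 h2]] := cl _ _ Fg U.
by move: h2; rewrite ltNge h1.
Qed.

Lemma cluster_ge (R : realType) (T : topologicalType) (F : set_system T) (p : T)
  (g : T -> R) (c : R) :
  cluster F p -> g @ p --> g p -> F [set x | c <= g x] -> c <= g p.
Proof.
move=> cl gc Fg; rewrite leNgt; apply/negP => cg.
have U := @cvgr_lt R T (nbhs p) (nbhs_filter p) g (g p) gc c cg.
have [y [/= h1 h2]] := cl _ _ Fg U.
by move: h2; rewrite ltNge h1.
Qed.

Lemma sc_conv_le (R : realType) n (D : set 'cV[R]_n) (f : 'cV[R]_n -> R) x y (t : R) :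
  strictly_convex_on D f -> D x -> D y -> 0 <= t <= 1 ->
  f (t *: x + (1 - t) *: y) <= t * f x + (1 - t) * f y.
Proof.
move=> cf Dx Dy /andP[t0 t1].
have [<-|xy] := eqVneq x y.
  by rewrite -scalerDl -mulrDl [t + _]addrC subrK scale1r mul1r.
have [->|t0'] := eqVneq t 0.
  by rewrite scale0r add0r subr0 scale1r mul0r add0r mul1r.
have [->|t1'] := eqVneq t 1.
  by rewrite scale1r subrr scale0r addr0 mul1r mul0r addr0.
apply: ltW; apply: cf => //; apply/andP; split; rewrite lt_neqAle ?t0 ?t1 andbT //.
by rewrite eq_sym.
Qed.


Lemma derive1_seg (R : realType) n (g : 'cV[R]_n -> R) (a b : 'cV[R]_n) (l : R) :
  differentiable g (l *: a + (1 - l) *: b) ->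
  derive1 (fun m => g (m *: a + (1 - m) *: b)) l = 'd g (l *: a + (1 - l) *: b) (a - b).
Proof.
move=> dg; rewrite -deriveE // /derive1 /derive.
have -> : (fun h : R => h^-1 *: (g ((h + l) *: a + (1 - (h + l)) *: b) - g (l *: a + (1 - l) *: b)))
  = (fun h => h^-1 *: ((g \o shift (l *: a + (1 - l) *: b)) (h *: (a - b)) - g (l *: a + (1 - l) *: b))).
  apply/funext => h /=; congr (_ *: (g _ - _)).
  by apply/matrixP => i j; rewrite !mxE; ring.
by [].
Qed.


Section Exist.
Variables (R : realType) (n m : nat) (S : 'M[int]_(n, m)) (Phi : 'cV[R]_n -> R)
  (xt x0 : 'cV[R]_n).
Hypotheses (pP : primal_thermodynamic Phi) (pxt : posorth n xt) (px0 : posorth n x0).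

Let A := Defs.realmx R S.
Let f x := bregman Phi x xt.
Let C := Psc S x0.
Let gt := grad Phi xt.

Lemma f_ge0 x : posorth n x -> 0 <= f x.
Proof. by move=> px; have := phi_tangent pP pxt px; rewrite /f /bregman; lra. Qed.

Lemma f_conv x y (t : R) : posorth n x -> posorth n y -> 0 <= t <= 1 ->
  f (t *: x + (1 - t) *: y) <= t * f x + (1 - t) * f y.
Proof.
move=> px py t01; case: pP => c _ _ _.
have := sc_conv_le c px py t01.
rewrite /f /bregman !(dotvBl, dotvDl, dotvZl).
nra.
Qed.

Lemma f_cont x : posorth n x -> f @ x --> f x.
Proof.
move=> px.
have -> : f = (fun y => Phi y - Phi xt - (dotv y gt - dotv xt gt)).
  by apply/funext => y; rewrite /f /bregman dotvBl.
have h1 : Phi @ x --> Phi x := differentiable_continuous (phi_diff pP px).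
have h2 : (fun y => dotv y gt) @ x --> dotv x gt := @dotv_cont R n gt x.
have h3 : (fun _ : 'cV[R]_n => Phi xt) @ x --> Phi xt := @cvg_cst _ _ _ (nbhs x) (nbhs_filter x).
have h4 : (fun _ : 'cV[R]_n => dotv xt gt) @ x --> dotv xt gt := @cvg_cst _ _ _ (nbhs x) (nbhs_filter x).
exact: (cvgB (cvgB h1 h3) (cvgB h2 h4)).
Qed.


Let I := inf [set f x | x in C].

Lemma C_x0 : C x0.
Proof. by split => //; exists 0; rewrite subrr mulmx0. Qed.

Lemma C_lb : has_lbound [set f x | x in C].
Proof. by exists 0 => _ [x Cx <-]; exact: f_ge0 Cx.1. Qed.

Lemma C_inf : has_inf [set f x | x in C].
Proof. by split; [exists (f x0); exists x0 => //; exact: C_x0 | exact: C_lb]. Qed.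

Lemma I_le x : C x -> I <= f x.
Proof. by move=> Cx; apply: (ge_inf C_lb); exists x. Qed.

Lemma I_adh (e : R) : 0 < e -> exists2 x, C x & f x < I + e.
Proof. by move=> e0; have [_ [x Cx <-] h] := @inf_adherent R _ e e0 C_inf; exists x. Qed.

Lemma le_sum1 (x : 'cV[R]_n) (i : 'I_n) : posorth n x -> x i 0 <= dotv x (const_mx 1).
Proof.
move=> px; rewrite /dotv (bigD1 i) //= mxE mulr1 lerDl.
by apply: sumr_ge0 => j _; rewrite mxE mulr1 ltW.
Qed.

Lemma bound_ex : exists C0, forall x i, posorth n x -> x i 0 <= f x - C0.
Proof.
case: (pP) => _ _ sur _.
have [z pz gz] := sur (gt + const_mx 1).
exists (Phi z - Phi xt - dotv z (gt + const_mx 1) + dotv xt gt) => x i px.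
have h1 := phi_tangent pP pz px.
have h2 := le_sum1 i px.
move: h1; rewrite gz /f /bregman !(dotvBl, dotvDr) -/gt.
lra.
Qed.

Let E e := [set x | C x /\ f x < I + e].
Let F := filter_from [set e : R | 0 < e] E.

Lemma F_proper : ProperFilter F.
Proof.
apply: filter_from_proper; last first.
  by move=> e /= e0; have [x Cx fx] := I_adh e0; exists x.
apply: filter_from_filter; first by exists 1 => /=.
move=> i j /= i0 j0; exists (Num.min i j); first by rewrite /= lt_min i0.
move=> x [Cx fx]; split; split => //; apply: (lt_le_trans fx); rewrite lerD2l;
  by rewrite ge_min lexx ?orbT.
Qed.


Lemma cluster_pt : exists xs : 'cV[R]_n,
  [/\ cluster F xs, nnegorth n xs & exists v, xs - x0 = A *m v].
Proof.
have [C0 hC0] := bound_ex.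
pose B := I + 1 - C0.
pose K := [set r : 'rV[R]_n | forall i, `[0, B]%classic (r ord0 i)].
have cK : compact K.
  by apply: (@rV_compact _ _ (fun _ => `[0, B]%classic)) => i; exact: segment_compact.
have FP := F_proper.
pose G := (fun x : 'cV[R]_n => x^T) @ F.
have GP : ProperFilter G := fmap_proper_filter _ FP.
have GK : G K.
  exists 1 => //= x [[px ex] fx] i; rewrite mxE /= in_itv /=; apply/andP; split.
    exact: ltW.
  by have := hC0 x i px; rewrite /B; lra.
have [r [Kr clr]] := cK G GP GK.
have clF : cluster F r^T.
  move=> P Q FPP nQ.
  have GP' : G [set y | P y^T].
    by rewrite /G /=; move: FPP; apply: filterS => y /=; rewrite trmxK.
  have nQ' : nbhs r [set y | Q y^T] by exact: (trmx_cont nQ).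
  have [y [h1 h2]] := clr _ _ GP' nQ'.
  by exists y^T.
exists r^T; split => //.
  by move=> i; rewrite mxE; have := Kr i; rewrite /= in_itv /= => /andP[].
pose Kc := cokermx (A^T).
have colE : forall (y : 'cV[R]_n) j, dotv y (col j Kc) = (y^T *m Kc) 0 j.
  by move=> y j; rewrite /dotv mxE; apply: eq_bigr => i _; rewrite !mxE.
have onC : forall y j, C y -> dotv y (col j Kc) = dotv x0 (col j Kc).
  move=> y j [_ [v ev]]; apply/eqP; rewrite -subr_eq0 -dotvBl colE ev.
  by rewrite trmx_mul -mulmxA mulmx_coker mulmx0 mxE.
have eqj : forall j, dotv r^T (col j Kc) = dotv x0 (col j Kc).
  move=> j; have cj := @dotv_cont R n (col j Kc) r^T.
  apply/eqP; rewrite eq_le; apply/andP; split.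
    apply: (cluster_le clF cj); exists 1; first exact: ltr01. move=> y [Cy _] /=; by rewrite (onC _ _ Cy).
  apply: (cluster_ge clF cj); exists 1; first exact: ltr01. move=> y [Cy _] /=; by rewrite (onC _ _ Cy).
have : ((r^T - x0)^T <= A^T)%MS.
  rewrite submxE; apply/eqP/matrixP => i j; rewrite (ord1 i) -colE dotvBl eqj subrr.
  by rewrite mxE.
move/submxP => [D eD]; exists D^T.
by rewrite -[LHS]trmxK eD trmx_mul trmxK.
Qed.

Lemma vec_eq1 (l : R) (v w : 'cV[R]_n) :
  l *: v + (1 - l) *: w - v = (1 - l) *: (w - v).
Proof. by apply/matrixP => i j; rewrite !mxE; ring. Qed.

Lemma not_boundary xs : cluster F xs -> nnegorth n xs ->
  (exists v, xs - x0 = A *m v) -> posorth n xs.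
Proof.
move=> clF nxs [v ev].
case: (pselect (posorth n xs)) => // nps; exfalso.
pose z (l : R) := l *: x0 + (1 - l) *: xs.
have pz : forall l : R, 0 < l <= 1 -> posorth n (z l).
  move=> l /andP[l0 l1] i; rewrite !mxE.
  have := px0 i; have := nxs i; nra.
have Cz : forall l : R, 0 < l <= 1 -> C (z l).
  move=> l l01; split; first exact: pz.
  by exists ((1 - l) *: v); rewrite /z vec_eq1 ev scalemxAr.
have hz : forall l : R, 0 < l < 1 -> f (z l) <= l * f x0 + (1 - l) * I.
  move=> l /andP[l0 l1].
  pose g x := f (l *: x0 + (1 - l) *: x).
  have gc : g @ xs --> g xs.
    have a1 : (fun _ : 'cV[R]_n => l *: x0) @ xs --> l *: x0 :=
      @cvg_cst _ _ _ (nbhs xs) (nbhs_filter xs).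
    have a2 : (fun x : 'cV[R]_n => (1 - l) *: x) @ xs --> (1 - l) *: xs :=
      cvgZl_tmp (@cvg_id _ (nbhs xs)).
    have a3 := cvgD a1 (a2 (nbhs_filter xs)).
    have a4 : f @ z l --> f (z l) by apply: f_cont; apply: pz; rewrite l0 ltW.
    have a5 := cvg_comp _ _ (a3 (nbhs_filter xs)) a4.
    exact: a5.
  apply/ler_addgt0Pr => e e0.
  have e1 : 0 < e / (1 - l) by apply: divr_gt0 => //; lra.
  apply: (cluster_le clF gc); exists (e / (1 - l)) => // x [[px ex] fx] /=.
  have l01 : 0 <= l <= 1 by apply/andP; split; lra.
  have h := f_conv px0 px l01.
  apply: (le_trans h).
  have : (1 - l) * f x <= (1 - l) * (I + e / (1 - l)).
    by apply: ler_wpM2l; [lra | exact: ltW].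
  have q : (1 - l) * (e / (1 - l)) = e by field; apply: lt0r_neq0; lra.
  lra.
case: (pP) => cPhi _ _ lim.
have H := lim x0 xs px0 nxs nps.
pose K := dotv (x0 - xs) gt.
have H2 := cvgrNy_lt H K.
have [l [hl /andP[l0 l1]]] :
    exists l, derive1 (fun m => Phi (m *: x0 + (1 - m) *: xs)) l < K /\ 0 < l < 1.
  apply: (@filter_ex _ _ (at_right_proper_filter 0)); near=> t; split; near: t.
    exact: H2.
  exact: near_right01.
have pzl : posorth n (z l) by apply: pz; rewrite l0 ltW.
rewrite (derive1_seg (phi_diff pP pzl)) in hl.
set D := 'd Phi _ _ in hl.
pose a := K - D.
have a0 : 0 < a by rewrite /a subr_gt0.
pose c := f x0 - I.
have c0 : 0 <= c by rewrite /c subr_ge0; exact: I_le C_x0.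
pose mm := l * a / (2 * (c + a)).
have ca0 : 0 < c + a by lra.
have emm : mm * (c + a) = l * a / 2.
  by rewrite /mm; field; apply: lt0r_neq0; lra.
have mm0 : 0 < mm by rewrite /mm; apply: divr_gt0; [exact: mulr_gt0 | lra].
have la0 : 0 < l * a by exact: mulr_gt0.
have mml : mm < l by nra.
have pzm : posorth n (z mm) by apply: pz; apply/andP; split => //; lra.
have tg := tangent_le cPhi pzl pzm (phi_diff pP pzl).
have ezz : z mm - z l = (mm - l) *: (x0 - xs).
  by apply/matrixP => i j; rewrite !mxE; ring.
rewrite ezz linearZ /= -/D in tg.
have tg' : Phi (z l) + (mm - l) * D <= Phi (z mm) := tg.
have hzm := hz mm (ltac:(apply/andP; split; lra)).
have hIl := I_le (Cz l (ltac:(apply/andP; split; lra))).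
have ed : dotv (z mm - xt) gt = dotv (z l - xt) gt + (mm - l) * K.
  have -> : z mm - xt = (z l - xt) + (mm - l) *: (x0 - xs).
    by apply/matrixP => i j; rewrite !mxE; ring.
  by rewrite dotvDl dotvZl.
have key : (l - mm) * a <= mm * c.
  move: hzm hIl; rewrite /c /a /f /bregman -/gt ed; lra.
have : (0:R) < 0 by nra.
by rewrite ltxx.
Unshelve. all: by end_near.
Qed.

Lemma near_pos (x w : 'cV[R]_n) : posorth n x ->
  \forall t \near (0:R)^'+, posorth n (x + t *: w).
Proof.
move=> px.
apply: filter_forall => i.
have d0 : 0 < x i 0 / (`|w i 0| + 1) by apply: divr_gt0 => //; rewrite ltr_wpDl.
near=> t.
have t0 : 0 < t by near: t; exact: nbhs_right_gt.
have td : t < x i 0 / (`|w i 0| + 1) by near: t; exact: nbhs_right_lt.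
rewrite !mxE.
have w1 : 0 < `|w i 0| + 1 by rewrite ltr_wpDl.
rewrite ltr_pdivlMr // in td.
have nw0 := normr_ge0 (w i 0).
have nw := ler_norm (w i 0).
have nw2 : - w i 0 <= `|w i 0| by rewrite -normrN ler_norm.
nra.
Unshelve. all: by end_near. Qed.

Lemma exist_main : exists xd, C xd /\ Meq S Phi xt xd.
Proof.
have [xs [clF nxs [v ev]]] := cluster_pt.
have pxs := not_boundary clF nxs (ex_intro _ v ev).
have Cxs : C xs by split => //; exists v.
have fxs : f xs <= I.
  apply/ler_addgt0Pr => e e0; apply: (cluster_le clF (f_cont pxs)).
  by exists e => // x [_ fx] /=; exact: ltW.
have step : forall u, dotv (A *m u) gt <= 'd Phi xs (A *m u).
  move=> u; apply: dq_ge (phi_diff pP pxs) _.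
  near=> t.
  have t0 : 0 < t by near: t; exact: nbhs_right_gt.
  have pt : posorth n (xs + t *: (A *m u)) by near: t; exact: near_pos.
  have Ct : C (xs + t *: (A *m u)).
    split => //; exists (v + t *: u).
    by rewrite mulmxDr -ev -scalemxAr addrAC.
  have h := le_trans fxs (I_le Ct).
  move: h; rewrite /f /bregman.
  have -> : xs + t *: (A *m u) - xt = (xs - xt) + t *: (A *m u).
    by rewrite addrAC.
  rewrite (dotvDl (xs - xt)) dotvZl -/gt => h.
  have h2 : t * dotv (A *m u) gt <= Phi (xs + t *: (A *m u)) - Phi xs by lra.
  rewrite -[leLHS](mulKf (lt0r_neq0 t0)).
  by apply: ler_wpM2l => //; rewrite invr_ge0 ltW.
have fin : forall (u : 'cV[R]_m) (G g : 'cV[R]_n), u = A^T *m (G - g) ->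
    dotv (A *m u) G = dotv (A *m u) g -> u = 0.
  move=> u G g eu e3; apply: dotv_eq0.
  have := dotv_mul A u (G - g).
  by rewrite dotvBr e3 subrr -eu => <-.
have e1 := step (A^T *m (grad Phi xs - gt)).
have e2 := step (- (A^T *m (grad Phi xs - gt))).
rewrite mulmxN linearN /= dotvNl in e2.
have e3 : 'd Phi xs (A *m (A^T *m (grad Phi xs - gt))) =
    dotv (A *m (A^T *m (grad Phi xs - gt))) gt.
  by apply/eqP; rewrite eq_le e1 andbT -lerN2.
rewrite diff_dotv in e3.
have u0 := fin _ _ _ erefl e3.

exists xs; split; first exact: Cxs.
split; first exact: pxs.
exact: u0.
Unshelve. all: by end_near. Qed.

End Exist.


Lemma existence (R : realType) (NX Ne : nat) (S : 'M[int]_(NX, Ne))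
  (Phi : 'cV[R]_NX -> R) (xt x0 : 'cV[R]_NX) :
  primal_thermodynamic Phi -> posorth NX xt -> posorth NX x0 ->
  exists xd, Psc S x0 xd /\ Meq S Phi xt xd.
Proof. by move=> pP pxt px0; exact: exist_main pP pxt px0. Qed.

Lemma orth_lemma (R : realType) (NX Ne : nat) (A : 'M[R]_(NX, Ne))
  (a b x0 gc gd gt : 'cV[R]_NX) :
  (exists v, a - x0 = A *m v) -> (exists v, b - x0 = A *m v) ->
  A^T *m (gc - gt) = 0 -> A^T *m (gd - gt) = 0 -> dotv (a - b) (gc - gd) = 0.
Proof.
move=> [va ea] [vb eb] hc hd.
have -> : a - b = A *m (va - vb) by rewrite mulmxBr -ea -eb; rewrite opprB addrA subrK.
have -> : gc - gd = (gc - gt) - (gd - gt) by rewrite opprB addrA subrK.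
by rewrite dotv_mul mulmxBr hc hd subrr dotv0r.
Qed.

Theorem mainTheorem4 (R : realType) (NX Ne : nat) (S : 'M[int]_(NX, Ne))
  (Phi : 'cV[R]_NX -> R) (Psi : 'cV[R]_NX -> 'cV[R]_Ne -> R)
  (xt x0 : 'cV[R]_NX) :
  primal_thermodynamic Phi ->
  posorth NX xt -> posorth NX x0 ->
  (forall x, posorth NX x -> dissipation (Psi x)) ->
  (exists xdag : 'cV[R]_NX,
     [/\ Psc S x0 `&` Meq S Phi xt = [set xdag],
         Psc S x0 `&` steady_state S Phi Psi xt = [set xdag],
         (Psc S x0 xdag /\ forall x, Psc S x0 x -> x != xdag ->
            bregman Phi xdag xt < bregman Phi x xt) &
         (Meq S Phi xt xdag /\ forall xq, Meq S Phi xt xq -> xq != xdag ->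
            bregman Phi x0 xdag < bregman Phi x0 xq)])
  /\ Meq S Phi xt = MDB S Phi Psi xt.
Proof.
move=> pP pxt px0 dPsi.
set A := Defs.realmx R S.
have MM : Meq S Phi xt = MDB S Phi Psi xt.
  apply/seteqP; split => x [px h]; split => //.
    by rewrite /flux h grad_psi0 //; exact: dPsi.
  apply: contra_eq (eqxx (0:R)) => u0.
  have := psi_dot_pos (dPsi x px) u0; rewrite -/(flux S Phi Psi xt x) h dotv0r ltxx.
  by [].
have SM : forall x, steady_state S Phi Psi xt x <-> Meq S Phi xt x.
  move=> x; split => [[px h]|[px h]]; split => //.
    apply: contra_eq (eqxx (0:R)) => u0.
    have := psi_dot_pos (dPsi x px) u0; rewrite -/(flux S Phi Psi xt x).
    rewrite -/A dotv_mul trmxK.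
    move/eqP: h; rewrite /eqflow oppr_eq0 => /eqP ->.
    by rewrite dotv0r ltxx.
  by rewrite /eqflow /flux h grad_psi0 ?mulmx0 ?oppr0 //; exact: dPsi.
have [xd [Pxd Mxd]] := existence S pP pxt px0.
have uniq : forall x, Psc S x0 x -> Meq S Phi xt x -> x = xd.
  move=> x [px ex] [_ mx]; apply/eqP; apply: contraT => xxd.
  have b1 := bregman_pos pP px Pxd.1 xxd.
  have xdx : xd != x by rewrite eq_sym.
  have b2 := bregman_pos pP Pxd.1 px xdx.
  have o := orth_lemma ex Pxd.2 mx Mxd.2.
  move: b1 b2 o; rewrite /bregman !(dotvBl, dotvBr).
  move: (grad Phi x) (grad Phi xd) => G1 G2 b1 b2 o.
  have : (0:R) < 0 by lra.
  by rewrite ltxx.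
have key1 : forall x, Psc S x0 x ->
    bregman Phi x xt - bregman Phi xd xt = bregman Phi x xd.
  move=> x [px ex].
  have mt : A^T *m (grad Phi xt - grad Phi xt) = 0 by rewrite subrr mulmx0.
  have o := orth_lemma ex Pxd.2 Mxd.2 mt.
  move: o; rewrite /bregman !(dotvBl, dotvBr).
  move: (grad Phi x) (grad Phi xd) (grad Phi xt) => G1 G2 G3; lra.
have key2 : forall xq, Meq S Phi xt xq ->
    bregman Phi x0 xq - bregman Phi x0 xd = bregman Phi xd xq.
  move=> xq [pq mq].
  have e0 : exists v, x0 - x0 = A *m v by exists 0; rewrite subrr mulmx0.
  have o := orth_lemma e0 Pxd.2 Mxd.2 mq.
  move: o; rewrite /bregman !(dotvBl, dotvBr).
  move: (grad Phi xq) (grad Phi xd) (grad Phi xt) => G1 G2 G3; lra.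
split; last exact: MM.
exists xd; split.
- apply/seteqP; split.
    by move=> x [Px Mx]; exact: uniq Px Mx.
  by move=> x /= ->; split; [exact: Pxd | exact: Mxd].
- apply/seteqP; split.
    by move=> x [Px /SM Mx]; exact: uniq Px Mx.
  by move=> x /= ->; split; [exact: Pxd | apply/SM; exact: Mxd].
- split => // x Px xxd; have := key1 x Px.
  have := bregman_pos pP Px.1 Pxd.1 xxd.
  move: (bregman Phi x xt) (bregman Phi xd xt) (bregman Phi x xd) => a b c; lra.
- split => // xq Mq xqd; have := key2 xq Mq.
  have dq : xd != xq by rewrite eq_sym.
  have := bregman_pos pP Pxd.1 Mq.1 dq.
  move: (bregman Phi x0 xq) (bregman Phi x0 xd) (bregman Phi xd xq) => a b c; lra.
Qed.
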